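(* Let $\langle A,f,c\rangle$ be an instance with $f$ subadditive and let $B\le 1$ be a budget. If $S\subseteq A$ satisfies $p(S)\le B$, then $|S\setminus L|\le 1$.
   Context: An instance $\langle A,f,c\rangle$ consists of a finite set $A$ of $n$ agents, a monotone nondecreasing set function $f:2^A\to[0,1]$ (the reward function), and costs $c=(c_i)_{i\in A}$ with $c_i\ge 0$. For $S\subseteq A$ and $i\in S$ write $f_S(i)=f(S)-f(S\setminus\{i\})$. The payment of a set $S$ is $p(S)=\sum_{i\in S} c_i/f_S(i)$, with the conventions $c_i/f_S(i)=0$ if $c_i=0=f_S(i)$ and $c_i/f_S(i)=\infty$ if $c_i>0=f_S(i)$. $f$ is subadditive if $f(S\cup S')\le f(S)+f(S')$ for all $S,S'\subseteq A$. The set of light agents is $L=\{i\in A: c_i/f(\{i\})\le 1/2\}$; agents in $A\setminus L$ are heavy. *)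

(* Defs.v *)
From HB Require Import structures.
From mathcomp Require Import all_boot all_order all_algebra.
From mathcomp Require Import constructive_ereal.
Set Implicit Arguments. Unset Strict Implicit. Unset Printing Implicit Defensive.
Import Order.TTheory GRing.Theory Num.Theory.
Local Open Scope ring_scope.
Local Open Scope ereal_scope.

Section Defs.
Variables (R : realFieldType) (T : finType).
Implicit Types (f : {set T} -> R).

(* The quotient c/d with the paper's conventions: 0/0 = 0, c/0 = +oo for c > 0. *)
Definition ratio (c d : R) : \bar R :=
  if (d == 0)%R then (if (c == 0)%R then 0 else +oo) else (c / d)%:E.

Definition marg (f : {set T} -> R) (S : {set T}) (i : T) : R :=
  (f S - f (S :\ i))%R.

Definition payment (f : {set T} -> R) (c : T -> R) (S : {set T}) : \bar R :=
  \sum_(i in S) ratio (c i) (marg f S i).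

Definition light (f : {set T} -> R) (c : T -> R) : {set T} :=
  [set i | ratio (c i) (f [set i]) <= (2^-1)%:E].

Definition reward_fun (f : {set T} -> R) : Prop :=
  (forall S : {set T}, 0 <= f S <= 1)%R /\ (forall S S' : {set T}, S \subset S' -> (f S <= f S')%R).

Definition subadditive (f : {set T} -> R) : Prop :=
  forall S S' : {set T}, (f (S :|: S') <= f S + f S')%R.
End Defs.

(* Main.v *)
Require Import Defs.
From HB Require Import structures.
From mathcomp Require Import all_boot all_order all_algebra.
From mathcomp Require Import constructive_ereal.
From mathcomp Require Import lra.
Import Order.TTheory GRing.Theory Num.Theory.
Local Open Scope ring_scope.

Lemma ratio_ge0 (R : realFieldType) (c d : R) : 0 <= c -> 0 <= d -> (0%:E <= Defs.ratio c d)%E.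
Proof.
move=> hc hd; rewrite /Defs.ratio; case: ifP => _; first by case: ifP => _; rewrite ?leey.
by rewrite lee_fin divr_ge0.
Qed.

Lemma heavy_term (R : realFieldType) (c m fi : R) : 0 <= c -> 0 <= m -> m <= fi ->
  ~~ (Defs.ratio c fi <= (2^-1)%:E)%E -> ((2^-1)%:E < Defs.ratio c m)%E.
Proof.
move=> hc hm hmf; rewrite -ltNge => h.
rewrite /Defs.ratio; case: ifPn => [/eqP m0|m0].
  case: ifPn => [/eqP c0|c0]; last by rewrite ltry.
  move: h; rewrite /Defs.ratio c0; case: ifP => _; rewrite ?mul0r ?eqxx lte_fin ltNge invr_ge0 ler0n //.
have mpos : 0 < m by rewrite lt0r m0.
have fpos : 0 < fi by apply: lt_le_trans hmf.
move: h; rewrite /Defs.ratio (gt_eqF fpos) !lte_fin => h; apply: (lt_le_trans h).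
rewrite ler_wpM2l // lef_pV2 //; by rewrite posrE.
Qed.

Theorem mainTheorem4 (R : realFieldType) (T : finType)
  (f : {set T} -> R) (c : T -> R) (B : R) (S : {set T}) :
  reward_fun f -> (forall i, 0 <= c i) -> subadditive f ->
  B <= 1 -> (payment f c S <= B%:E)%E ->
  (#|S :\: light f c| <= 1)%N.
Proof.
move=> [f01 fmon] hc fsub hB hp.
rewrite leqNgt; apply/negP => /card_gt1P [i [j [hi hj ij]]].
move: hi hj; rewrite !in_setD => /andP [hiL hiS] /andP [hjL hjS].
have mge0 k : k \in S -> 0 <= marg f S k.
  by move=> _; rewrite /marg subr_ge0 fmon // subsetDl.
have mle k : k \in S -> marg f S k <= f [set k].
  move=> kS; rewrite /marg lerBlDl.
  by rewrite -{1}(setD1K kS) setUC fsub.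
have ht k : k \in S -> k \notin light f c -> ((2^-1)%:E < Defs.ratio (c k) (marg f S k))%E.
  move=> kS kL; apply: (@heavy_term _ _ _ (f [set k])) => //; [exact: mge0|exact: mle|].
  by move: kL; rewrite inE.
have := hp; rewrite /payment (bigD1 i) //= (bigD1 j) /=; last by rewrite hjS eq_sym.
move=> H; have: (1%:E < B%:E)%E; last by rewrite lte_fin ltNge hB.
have r0 : (0%:E <= \sum_(k | (k \in S) && (k != i) && (k != j))
    Defs.ratio (c k) (marg f S k))%E.
  apply: sume_ge0 => k /andP [/andP [kS _] _]; apply: ratio_ge0 => //; exact: mge0.
have h12 := lteD (ht i hiS hiL) (lte_paddr r0 (ht j hjS hjL)).
apply: le_lt_trans (lt_le_trans h12 H).
by rewrite -EFinD lee_fin; lra.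
Qed.
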